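(* Let $X$ be a countable set and $\mathcal{A}\subseteq\mathcal{P}_\infty(X)$ hereditary. The following are equivalent: (i) $\mathcal{A}$ is an M-family; (ii) for every decreasing sequence $(D_n)_n$ in $\mathrm{co}(\mathcal{A})$ there is $A\in\mathcal{A}$ with $A\setminus D_n$ finite for every $n$; (iii) for every sequence $(A_n)_n$ in $\mathcal{A}$ there is $A\in\mathcal{A}$ with $A\cap A_n\neq\varnothing$ for infinitely many $n$.
   Context: $\mathcal{P}_\infty(X)$: infinite subsets of $X$. Hereditary: $A\in\mathcal{A}$, $A'\subseteq A$ infinite imply $A'\in\mathcal{A}$. An M-family is a hereditary family $\mathcal{A}$ such that for every sequence $(A_n)_n$ in $\mathcal{A}$ there is $A\in\mathcal{A}$ with $A\setminus\bigcup_{i\ge n}A_i$ finite for every $n$. $\mathrm{co}(\mathcal{A})=\{B\in\mathcal{P}_\infty(X):\exists A\in\mathcal{A},\ B\cap A\text{ infinite}\}$. *)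

(* Defs.v *)
From Stdlib Require Import List.

Definition finite_set {X : Type} (S : X -> Prop) : Prop :=
  exists l : list X, forall x, S x -> In x l.

Definition infinite_set {X : Type} (S : X -> Prop) : Prop := ~ finite_set S.

Definition countable_type (X : Type) : Prop :=
  exists f : X -> nat, forall x y, f x = f y -> x = y.

Definition subset {X : Type} (A B : X -> Prop) : Prop := forall x, A x -> B x.

Definition family_in_Pinf {X : Type} (F : (X -> Prop) -> Prop) : Prop :=
  forall A, F A -> infinite_set A.

Definition hereditary {X : Type} (F : (X -> Prop) -> Prop) : Prop :=
  forall A A', F A -> subset A' A -> infinite_set A' -> F A'.

Definition tail_union {X : Type} (As : nat -> X -> Prop) (n : nat) : X -> Prop :=
  fun x => exists i, n <= i /\ As i x.

Definition M_family {X : Type} (F : (X -> Prop) -> Prop) : Prop :=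
  hereditary F /\
  forall As : nat -> X -> Prop, (forall n, F (As n)) ->
    exists A, F A /\ forall n, finite_set (fun x => A x /\ ~ tail_union As n x).

Definition co {X : Type} (F : (X -> Prop) -> Prop) : (X -> Prop) -> Prop :=
  fun B => infinite_set B /\ exists A, F A /\ infinite_set (fun x => B x /\ A x).

(* Main.v *)
Require Import Defs.
From Stdlib Require Import List Arith Lia Classical ClassicalEpsilon.

Lemma fin_sub {X} (A B : X -> Prop) : (forall x, A x -> B x) -> finite_set B -> finite_set A.
Proof. intros H [l Hl]. exists l. auto. Qed.

Lemma inf_mono {X} (A B : X -> Prop) : (forall x, A x -> B x) -> infinite_set A -> infinite_set B.
Proof. intros H HA HB. apply HA. eapply fin_sub; eauto. Qed.

Lemma inf_minus {X} (A S : X -> Prop) : infinite_set A -> finite_set S ->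
  infinite_set (fun x => A x /\ ~ S x).
Proof.
  intros HA [l2 H2] [l1 H1]. apply HA. exists (l1 ++ l2). intros x Ax.
  apply in_or_app. destruct (classic (S x)); auto.
Qed.

Lemma fin_lt {X} (f : X -> nat) : (forall x y, f x = f y -> x = y) ->
  forall n, finite_set (fun x => f x < n).
Proof.
  intros Hf n. induction n as [|n [l Hl]].
  - exists nil. intros x Hx. lia.
  - destruct (classic (exists x, f x = n)) as [[y Hy]|Hn].
    + exists (y :: l). intros x Hx. destruct (Nat.eq_dec (f x) n).
      * left. apply Hf. congruence.
      * right. apply Hl. lia.
    + exists l. intros x Hx. apply Hl. destruct (Nat.eq_dec (f x) n).
      * exfalso; eauto.
      * lia.
Qed.

Lemma list_bound {X} (f : X -> nat) (l : list X) : exists M, forall y, In y l -> f y < M.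
Proof.
  induction l as [|a l [M HM]].
  - exists 0. intros y [].
  - exists (S (Nat.max M (f a))). intros y [<-|Hy].
    + lia.
    + specialize (HM y Hy). lia.
Qed.

Lemma decr {X} (D : nat -> X -> Prop) : (forall n, subset (D (S n)) (D n)) ->
  forall n i, n <= i -> subset (D i) (D n).
Proof.
  intros H n i Hi. induction Hi.
  - intros x h; exact h.
  - intros x h. apply IHHi. apply H. exact h.
Qed.

Theorem fact3 (X : Type) (F : (X -> Prop) -> Prop)
  (hX : countable_type X) (hF : family_in_Pinf F) (hher : hereditary F) :
  (M_family F <->
   (forall D : nat -> X -> Prop,
      (forall n, co F (D n)) -> (forall n, subset (D (S n)) (D n)) ->
      exists A, F A /\ forall n, finite_set (fun x => A x /\ ~ D n x)))
  /\
  (M_family F <->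
   (forall As : nat -> X -> Prop, (forall n, F (As n)) ->
      exists A, F A /\
        forall N, exists n, N <= n /\ exists x, A x /\ As n x)).
Proof.
  split; split.
  - intros [_ HM] D HD Hdec.
    assert (Hc : forall n, { A | F A /\ infinite_set (fun x => D n x /\ A x) }).
    { intro n. apply constructive_indefinite_description. exact (proj2 (HD n)). }
    set (As := fun n x => D n x /\ proj1_sig (Hc n) x).
    assert (HAs : forall n, F (As n)).
    { intro n. destruct (proj2_sig (Hc n)) as [h1 h2].
      apply (hher _ _ h1); [intros x [_ h]; exact h | exact h2]. }
    destruct (HM As HAs) as [A [FA HA]]. exists A. split; [exact FA|].
    intro n. eapply fin_sub; [|exact (HA n)]. intros x [Ax Dx]. split; [exact Ax|].
    intros [i [Hi [Di _]]]. apply Dx. exact (decr D Hdec n i Hi x Di).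
  - intros H. split; [exact hher|]. intros As HAs.
    apply (H (tail_union As)).
    + intro n. split.
      * apply (inf_mono (As n)); [intros x h; exists n; split; auto | exact (hF _ (HAs n))].
      * exists (As n). split; [exact (HAs n)|].
        apply (inf_mono (As n)); [|exact (hF _ (HAs n))].
        intros x h. split; [exists n; split; auto | exact h].
    + intros n x [i [Hi h]]. exists i. split; [lia | exact h].
  - intros [_ HM] As HAs. destruct (HM As HAs) as [A [FA HA]].
    exists A. split; [exact FA|]. intro N.
    destruct (classic (exists x, A x /\ tail_union As N x)) as [[x [Ax [i [Hi h]]]]|Hn].
    + exists i. split; [exact Hi|]. exists x. auto.
    + exfalso. apply (hF _ FA). eapply fin_sub; [|exact (HA N)].
      intros x Ax. split; [exact Ax|]. intro T. apply Hn. eauto.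
  - intros H. split; [exact hher|]. intros As HAs.
    destruct hX as [f Hf].
    set (B := fun n x => As n x /\ n <= f x).
    assert (HB : forall n, F (B n)).
    { intro n. apply (hher _ _ (HAs n)); [intros x [h _]; exact h|].
      apply (inf_mono (fun x => As n x /\ ~ f x < n)).
      - intros x [h1 h2]. split; [exact h1|lia].
      - apply inf_minus; [exact (hF _ (HAs n)) | apply fin_lt; exact Hf]. }
    destruct (H B HB) as [A [FA HA]].
    assert (Hc : forall N, { x | A x /\ exists n, N <= n /\ B n x }).
    { intro N. apply constructive_indefinite_description.
      destruct (HA N) as [n [Hn [x [Ax Bx]]]]. exists x. split; [exact Ax|]. eauto. }
    set (xs := fun N => proj1_sig (Hc N)).
    assert (Hxs : forall N, A (xs N) /\ exists n, N <= n /\ B n (xs N)).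
    { intro N. exact (proj2_sig (Hc N)). }
    exists (fun x => exists N, x = xs N). split.
    + apply (hher _ _ FA).
      * intros x [N ->]. apply Hxs.
      * intros [l Hl]. destruct (list_bound f l) as [M HM].
        specialize (HM (xs M) (Hl _ (ex_intro _ M eq_refl))).
        destruct (Hxs M) as [_ [n [Hn [_ Hf2]]]]. lia.
    + intro m. exists (map xs (seq 0 m)). intros x [[N ->] Hnt].
      apply in_map. apply in_seq. destruct (Nat.lt_ge_cases N m) as [h|h]; [lia|].
      exfalso. apply Hnt. destruct (Hxs N) as [_ [n [Hn [Hb _]]]].
      exists n. split; [lia | exact Hb].
Qed.
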